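(* For every integer $N \ge 4$ and every $\Omega \in [-\pi,\pi]$, with $W = 4$ and the window $\mathcal W^\star$ defined in the context, the captured energy fraction satisfies $$E_{4,N}(\delta) = \sum_{n\in\mathcal W^\star}|y_n|^2 \;\ge\; \frac{80}{9\pi^2} \approx 0.9006 > 0.9 .$$ (The value $80/(9\pi^2)$ is the minimum over $\delta\in[0,\tfrac12]$ of $\sum_{n\in\mathcal W^\star}\operatorname{sinc}^2(n-\nu)$, attained at $\delta = 1/2$.)
   Context: Steering vector $\mathbf a(\Omega) = [1, e^{j\Omega}, \dots, e^{j(N-1)\Omega}]^\top$. Dirichlet kernel $D_N(\omega) = \frac1N\sum_{n=0}^{N-1}e^{j\omega n}$. Normalized DFT coefficients $y_n = D_N(\Omega - 2\pi n/N)$ for integers $n$ (so $\sum_{n=0}^{N-1}|y_n|^2=1$). $\operatorname{sinc}(x)=\sin(\pi x)/(\pi x)$. Put $\nu = N\Omega/(2\pi)$, $n_0=\mathrm{round}(\nu)$, $\delta = |\nu-n_0|\in[0,1/2]$. For $W=4$ the window is $\mathcal W^\star = \{n_0-1, n_0, n_0+1, n_0+2\}$ if $\nu = n_0+\delta$ and $\mathcal W^\star = \{n_0-2,n_0-1,n_0,n_0+1\}$ if $\nu = n_0-\delta$ (bins taken modulo $N$). *)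

(* Defs.v *)
From Stdlib Require Import Reals ZArith List.
From Coquelicot Require Import Coquelicot.
Import ListNotations.
Open Scope R_scope.

Definition cexpj (t : R) : C := (cos t, sin t).

(* Dirichlet kernel D_N(w) = (1/N) sum_{n=0}^{N-1} e^{j w n}
   (Coquelicot's sum_n a m = a 0 + ... + a m). *)
Definition dirichlet (N : nat) (w : R) : C :=
  Cmult (/ INR N) (sum_n (fun k => cexpj (w * INR k)) (N - 1)).

Definition dft_coef (N : nat) (Omega : R) (n : Z) : C :=
  dirichlet N (Omega - 2 * PI * IZR n / INR N).

(* floor via Stdlib's up : up x - 1 <= x < up x *)
Definition Rfloor_Z (x : R) : Z := (up x - 1)%Z.

(* nu = N Omega / (2 pi);  n0 = round(nu) (ties rounded up) *)
Definition nu_of (N : nat) (Omega : R) : R := INR N * Omega / (2 * PI).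
Definition n0_of (N : nat) (Omega : R) : Z := Rfloor_Z (nu_of N Omega + /2).

(* Bins are integers; y_n is N-periodic in n,
   so taking them modulo N does not change the coefficients. *)
Definition window4 (N : nat) (Omega : R) : list Z :=
  let n0 := n0_of N Omega in
  if Rle_dec (IZR n0) (nu_of N Omega)
  then [(n0 - 1)%Z; n0; (n0 + 1)%Z; (n0 + 2)%Z]
  else [(n0 - 2)%Z; (n0 - 1)%Z; n0; (n0 + 1)%Z].

Definition energy4 (N : nat) (Omega : R) : R :=
  fold_right Rplus 0 (map (fun n => (Cmod (dft_coef N Omega n)) ^ 2) (window4 N Omega)).

(* Main.v *)
Require Import Defs.
From Stdlib Require Import Reals ZArith List Lra Lia Psatz.
From Coquelicot Require Import Coquelicot.
Open Scope R_scope.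

Lemma cexpj_add a b : Cmult (cexpj a) (cexpj b) = cexpj (a + b).
Proof.
  unfold cexpj, Cmult; simpl. rewrite cos_plus, sin_plus.
  apply injective_projections; simpl; ring.
Qed.

Lemma geom (w : R) (m : nat) :
  Cmult (Cminus (cexpj w) (RtoC 1)) (sum_n (fun k => cexpj (w * INR k)) m)
  = Cminus (cexpj (w * INR (S m))) (RtoC 1).
Proof.
  induction m as [|m IH].
  - rewrite sum_O. simpl INR. rewrite Rmult_0_r, Rmult_1_r.
    unfold cexpj, Cminus, Cmult, Cplus, Copp, RtoC; simpl.
    rewrite cos_0, sin_0. apply injective_projections; simpl; ring.
  - rewrite sum_Sn. change (plus ?a ?b) with (Cplus a b).
    rewrite Cmult_plus_distr_l, IH.
    assert (E : Cmult (Cminus (cexpj w) (RtoC 1)) (cexpj (w * INR (S m)))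
       = Cminus (cexpj (w * INR (S (S m)))) (cexpj (w * INR (S m)))).
    { unfold Cminus. rewrite Cmult_plus_distr_r, cexpj_add.
      replace (w + w * INR (S m)) with (w * INR (S (S m)))
        by (rewrite !S_INR; ring).
      f_equal. unfold Copp, Cmult, RtoC; simpl.
      apply injective_projections; simpl; ring. }
    rewrite E. unfold Cminus, Cplus, Copp; simpl.
    apply injective_projections; simpl; ring.
Qed.

Lemma cmod2 (c : C) : Cmod c ^ 2 = fst c ^ 2 + snd c ^ 2.
Proof.
  unfold Cmod. rewrite pow2_sqrt; [reflexivity|].
  nra.
Qed.

Lemma cmod_e1 a : Cmod (Cminus (cexpj a) (RtoC 1)) ^ 2 = 2 - 2 * cos a.
Proof.
  rewrite cmod2. unfold cexpj, Cminus, Cplus, Copp, RtoC; simpl.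
  pose proof (sin2_cos2 a). unfold Rsqr in H. nra.
Qed.

Lemma dir_id (N : nat) (w : R) : (1 <= N)%nat ->
  Cmod (dirichlet N w) ^ 2 * (2 - 2 * cos w) = (2 - 2 * cos (w * INR N)) / INR N ^ 2.
Proof.
  intros HN. unfold dirichlet.
  pose proof (geom w (N - 1)) as G.
  replace (S (N - 1)) with N in G by lia.
  assert (HNp : 0 < INR N) by (apply lt_0_INR; lia).
  set (s := sum_n (fun k : nat => cexpj (w * INR k)) (N - 1)) in *.
  change (sum_n (fun k : nat => cexpj (w * INR k)) (N - 1)) with s in G.
  rewrite (Cmod_mult (Cinv (RtoC (INR N))) s), Cmod_inv, Cmod_R, Rabs_right;
   [| lra | intro Hc; apply RtoC_inj in Hc; lra].
  rewrite <- (cmod_e1 w), <- cmod_e1, <- G, Cmod_mult.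
  field. lra.
Qed.

Lemma PI_bounds : 314/100 <= PI <= 315/100.
Proof.
  pose proof (PI_2_3_7_ineq 1) as [H1 H2].
  unfold tg_alt, PI_2_3_7_tg, Ratan_seq in H1, H2. simpl in H1, H2. lra.
Qed.

Lemma sin_lb_eq x : sin_lb x = x - x^3/6 + x^5/120 - x^7/5040.
Proof.
  unfold sin_lb, sin_approx, sin_term. simpl sum_f_R0.
  simpl. field.
Qed.

Lemma cos_lb_eq x : cos_lb x = 1 - x^2/2 + x^4/24 - x^6/720.
Proof.
  unfold cos_lb, cos_approx, cos_term. simpl sum_f_R0.
  simpl. field.
Qed.

Definition PA d := 9*(985/100)*(1-985/600*d^2)^2*((1-d)^2*(1+d)^2*(2-d)^2 + d^2*(1+d)^2*(2-d)^2 + d^2*(1-d)^2*(2-d)^2 + d^2*(1-d)^2*(1+d)^2) - 80*((1-d)^2*(1+d)^2*(2-d)^2).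

Lemma powb (s h:R) (k:nat) : 0 <= s <= h -> 0 <= s^k <= h^k.
Proof. intros [H1 H2]. split. apply pow_le; lra. apply pow_incr; lra. Qed.

Lemma PA1 (s:R) : 0 <= s <= 14/100 -> PA (29/100 - s) >= 0.
Proof. intros Hs.
 pose proof (powb _ _ 2 Hs). pose proof (powb _ _ 3 Hs). pose proof (powb _ _ 4 Hs).
 pose proof (powb _ _ 5 Hs). pose proof (powb _ _ 6 Hs). pose proof (powb _ _ 7 Hs).
 pose proof (powb _ _ 8 Hs). pose proof (powb _ _ 9 Hs). pose proof (powb _ _ 10 Hs).
 unfold PA. ring_simplify. simpl in *. lra. Qed.

Lemma PA2 (s:R) : 0 <= s <= 15/100 -> PA (15/100 - s) >= 0.
Proof. intros Hs.
 pose proof (powb _ _ 2 Hs). pose proof (powb _ _ 3 Hs). pose proof (powb _ _ 4 Hs).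
 pose proof (powb _ _ 5 Hs). pose proof (powb _ _ 6 Hs). pose proof (powb _ _ 7 Hs).
 pose proof (powb _ _ 8 Hs). pose proof (powb _ _ 9 Hs). pose proof (powb _ _ 10 Hs).
 unfold PA. ring_simplify. simpl in *. lra. Qed.

Lemma PA_ok d : 0 <= d <= 29/100 -> PA d >= 0.
Proof.
  intros Hd. destruct (Rle_dec d (15/100)).
  - replace d with (15/100 - (15/100 - d)) by ring. apply PA2; lra.
  - replace d with (29/100 - (29/100 - d)) by ring. apply PA1; lra.
Qed.

Lemma regB (u:R) : 0 <= u <= 1764/10000 ->
 9*(1 - 993/800*u)^2*(8*(1+u)*(9-u)^2 + 8*(9+u)*(1-u)^2) - 80*(1-u)^2*(9-u)^2 >= 0.
Proof. intros. nra. Qed.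

Definition Tsum d := / d^2 + / (1-d)^2 + / (1+d)^2 + / (2-d)^2.

Lemma mainA d : 0 < d <= 29/100 -> sin (PI * d) ^ 2 * Tsum d >= 80/9.
Proof.
  intros Hd. pose proof PI_bounds as HP.
  set (x := PI * d).
  assert (Hx : 0 < x <= PI/2) by (unfold x; split; [apply Rmult_lt_0_compat; lra | nra]).
  pose proof (SIN x) as [Hs _]; try lra. rewrite sin_lb_eq in Hs.
  assert (Hx2 : x^2 <= 3) by nra.
  assert (Hs2 : sin x >= x - x^3/6).
  { assert (x^5*(1/120 - x^2/5040) >= 0) by (apply Rle_ge, Rmult_le_pos; [apply pow_le; lra| lra]).
    assert (x^5/120 - x^7/5040 = x^5*(1/120 - x^2/5040)) by field. lra. }
  assert (Hs3 : x - x^3/6 >= 0).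
  { assert (x*(1 - x^2/6) >= 0) by (apply Rle_ge, Rmult_le_pos; lra).
    assert (x - x^3/6 = x*(1 - x^2/6)) by field. lra. }
  assert (Hsq : sin x ^ 2 >= (x - x^3/6)^2) by nra.
  set (q := PI^2).
  assert (Hq : 98596/10000 <= q <= 99225/10000) by (unfold q; nra).
  assert (Ex : (x - x^3/6)^2 = q * d^2 * (1 - q*d^2/6)^2) by (unfold x, q; field).
  set (q0 := 985/100).
  assert (Hmono : q * (1 - q*d^2/6)^2 >= q0 * (1 - q0*d^2/6)^2).
  { assert (Hd2 : d^2 <= 841/10000) by nra.
    assert (Hb : 1 - (q*d^2 + q0*d^2)/3 + ((q*d^2)^2 + (q*d^2)*(q0*d^2) + (q0*d^2)^2)/36 >= 0).
    { assert (0 <= q*d^2 <= 1) by (split; nra). assert (0 <= q0*d^2 <= 1) by (unfold q0; split; nra). nra. }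
    assert (E : q * (1 - q*d^2/6)^2 - q0 * (1 - q0*d^2/6)^2 =
      (q - q0) * (1 - (q*d^2 + q0*d^2)/3 + ((q*d^2)^2 + (q*d^2)*(q0*d^2) + (q0*d^2)^2)/36)) by field.
    assert (q - q0 >= 0) by (unfold q0; lra). nra. }
  set (Den := (1-d)^2*(1+d)^2*(2-d)^2).
  set (Num := (1-d)^2*(1+d)^2*(2-d)^2 + d^2*(1+d)^2*(2-d)^2 + d^2*(1-d)^2*(2-d)^2 + d^2*(1-d)^2*(1+d)^2).
  assert (HDen : Den > 0) by (unfold Den; apply Rmult_gt_0_compat; [apply Rmult_gt_0_compat|]; apply pow_lt; lra).
  assert (ET : d^2 * Tsum d * Den = Num).
  { unfold Tsum, Den, Num. field. repeat split; lra. }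
  pose proof (PA_ok d ltac:(lra)) as HA. unfold PA in HA. fold Num in HA; fold Den in HA.
  assert (HT : Tsum d > 0).
  { unfold Tsum. assert (forall y, y <> 0 -> / y^2 > 0) by (intros; apply Rinv_0_lt_compat; simpl; rewrite Rmult_1_r; apply Rsqr_pos_lt; auto).
    pose proof (H d ltac:(lra)); pose proof (H (1-d) ltac:(lra)); pose proof (H (1+d) ltac:(lra)); pose proof (H (2-d) ltac:(lra)). lra. }
  assert (K : q0 * (1 - q0*d^2/6)^2 * (d^2 * Tsum d) >= 80/9).
  { apply Rle_ge, (Rmult_le_reg_r Den); [lra|]. rewrite Rmult_assoc, ET.
    assert (Eq0 : q0 * (1 - q0*d^2/6)^2 * Num = (985/100)*(1-985/600*d^2)^2*Num) by (unfold q0; field).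
    lra. }
  assert (Hdt : d^2 * Tsum d >= 0) by (apply Rle_ge, Rmult_le_pos; [apply pow2_ge_0 | lra]).
  assert (sin x ^2 * Tsum d >= (x - x^3/6)^2 * Tsum d) by (apply Rmult_ge_compat_r; lra).
  rewrite Ex in H.
  assert (q * d^2 * (1 - q*d^2/6)^2 * Tsum d = (q * (1 - q*d^2/6)^2) * (d^2 * Tsum d)) by ring.
  nra.
Qed.

Lemma mainB d : 29/100 <= d <= 1/2 -> sin (PI * d) ^ 2 * Tsum d >= 80/9.
Proof.
  intros Hd. pose proof PI_bounds as HP.
  set (e := 1/2 - d).
  assert (He : 0 <= e <= 21/100) by (unfold e; lra).
  set (y := PI * e).
  assert (Hy : 0 <= y <= 67/100) by (unfold y; split; nra).
  assert (Hsc : sin (PI * d) = cos y).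
  { rewrite <- sin_shift. f_equal. unfold y, e. field. }
  rewrite Hsc.
  pose proof (COS y) as [Hc _]; try lra. rewrite cos_lb_eq in Hc.
  assert (Hc2 : cos y >= 1 - y^2/2).
  { assert (y^4*(1/24 - y^2/720) >= 0) by (apply Rle_ge, Rmult_le_pos; [apply pow_le; lra| nra]).
    assert (y^4/24 - y^6/720 = y^4*(1/24 - y^2/720)) by field. lra. }
  set (u := (1 - 2*d)^2).
  assert (Hu : 0 <= u <= 1764/10000) by (unfold u; split; nra).
  assert (Hyu : y^2 = PI^2 * u / 4) by (unfold y, u, e; field).
  assert (Hc3 : 1 - y^2/2 >= 1 - 993/800*u).
  { rewrite Hyu. assert (PI^2 <= 993/100) by nra. nra. }
  assert (Hc4 : 1 - 993/800*u >= 0) by lra.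
  assert (Hsq : cos y ^ 2 >= (1 - 993/800*u)^2) by nra.
  set (A := (1-u)^2). set (B := (9-u)^2).
  assert (HA : A > 0) by (unfold A; nra).
  assert (HB : B > 0) by (unfold B; nra).
  assert (ET : Tsum d * (A * B) = 8*(1+u)*B + 8*(9+u)*A).
  { unfold Tsum, A, B, u. field. repeat split; lra. }
  pose proof (regB u Hu) as HR. fold A B in HR.
  assert (HT : Tsum d > 0).
  { unfold Tsum. assert (forall z, z <> 0 -> / z^2 > 0) by (intros; apply Rinv_0_lt_compat; simpl; rewrite Rmult_1_r; apply Rsqr_pos_lt; auto).
    pose proof (H d ltac:(lra)); pose proof (H (1-d) ltac:(lra)); pose proof (H (1+d) ltac:(lra)); pose proof (H (2-d) ltac:(lra)). lra. }
  assert (K : (1 - 993/800*u)^2 * Tsum d >= 80/9).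
  { apply Rle_ge, (Rmult_le_reg_r (A*B)); [nra|].
    rewrite Rmult_assoc, ET. lra. }
  assert (cos y ^2 * Tsum d >= (1 - 993/800*u)^2 * Tsum d) by (apply Rmult_ge_compat_r; lra).
  lra.
Qed.

Lemma sin2_le x : sin x ^ 2 <= x ^ 2.
Proof.
  assert (G : forall y, 0 <= y -> sin y ^ 2 <= y ^ 2).
  { intros y Hy. destruct (Req_dec y 0) as [->|Hy0].
    - rewrite sin_0. lra.
    - pose proof (sin_lt_x y ltac:(lra)). pose proof (SIN_bound y).
      destruct (Rle_dec y 1).
      + pose proof (sin_ge_0 y Hy ltac:(pose proof PI2_3_2; lra)). nra.
      + nra. }
  destruct (Rle_dec 0 x). apply G; auto.
  replace (sin x ^ 2) with (sin (-x) ^ 2) by (rewrite sin_neg; ring).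
  replace (x ^ 2) with ((-x)^2) by ring. apply G; lra.
Qed.

Lemma omc w : 2 - 2 * cos w <= w ^ 2.
Proof.
  replace w with (2 * (w/2)) at 1 by field. rewrite cos_2a_sin.
  pose proof (sin2_le (w/2)). unfold Rsqr. simpl in *. nra.
Qed.

Lemma cos_shiftZ x m : cos (x - 2 * PI * IZR m) = cos x.
Proof.
  rewrite cos_minus.
  assert (S1 : sin (PI * IZR m) = 0) by (apply sin_eq_0_1; exists m; ring).
  assert (S2 : sin (2 * PI * IZR m) = 0) by (apply sin_eq_0_1; exists (2*m)%Z; rewrite mult_IZR; simpl; ring).
  assert (C2 : cos (2 * PI * IZR m) = 1).
  { replace (2 * PI * IZR m) with (2 * (PI * IZR m)) by ring. rewrite cos_2a_sin, S1. unfold Rsqr. ring. }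
  rewrite S2, C2. ring.
Qed.

Lemma dir_lb (N : nat) (w : R) : (1 <= N)%nat ->
  Cmod (dirichlet N w) ^ 2 >= (2 - 2 * cos (w * INR N)) / (INR N ^ 2 * w ^ 2).
Proof.
  intros HN. pose proof (dir_id N w HN) as E.
  assert (HNp : 0 < INR N) by (apply lt_0_INR; lia).
  destruct (Req_dec w 0) as [->|Hw].
  - rewrite Rmult_0_l, cos_0. unfold Rdiv. replace (INR N ^ 2 * 0 ^ 2) with 0 by ring.
    rewrite Rinv_0. pose proof (pow2_ge_0 (Cmod (dirichlet N 0))). lra.
  - pose proof (omc w) as H1.
    pose proof (pow2_ge_0 (Cmod (dirichlet N w))) as H2.
    assert (Hw2 : 0 < w ^ 2) by (simpl; rewrite Rmult_1_r; apply Rsqr_pos_lt; auto).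
    assert (Cmod (dirichlet N w) ^ 2 * w ^ 2 >= (2 - 2 * cos (w * INR N)) / INR N ^ 2) by nra.
    apply Rle_ge. unfold Rdiv. rewrite Rinv_mult.
    apply (Rmult_le_reg_r (w^2)); auto.
    replace ((2 - 2 * cos (w * INR N)) * (/ INR N ^ 2 * / w ^ 2) * w ^ 2)
      with ((2 - 2 * cos (w * INR N)) / INR N ^ 2) by (field; lra). lra.
Qed.

Lemma sum_const0 m : sum_n (fun k => cexpj (0 * INR k)) m = RtoC (INR (S m)).
Proof.
  induction m as [|m IH].
  - rewrite sum_O. simpl. unfold cexpj, RtoC. rewrite Rmult_0_l, cos_0, sin_0. reflexivity.
  - rewrite sum_Sn, IH. change (plus ?a ?b) with (Cplus a b).
    rewrite (S_INR (S m)).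
    unfold cexpj, RtoC, Cplus. rewrite Rmult_0_l, cos_0, sin_0.
    apply injective_projections; unfold fst, snd; ring.
Qed.

Lemma dir0 (N : nat) : (1 <= N)%nat -> Cmod (dirichlet N 0) = 1.
Proof.
  intros HN. assert (HNp : 0 < INR N) by (apply lt_0_INR; lia).
  unfold dirichlet. rewrite sum_const0. replace (S (N - 1)) with N by lia.
  rewrite <- RtoC_inv, <- RtoC_mult, Cmod_R, Rinv_l by lra. apply Rabs_R1.
Qed.


Lemma mainM d : 0 < d <= 1/2 -> sin (PI * d) ^ 2 * Tsum d >= 80/9.
Proof.
  intros Hd. destruct (Rle_dec d (29/100)).
  - apply mainA; lra.
  - apply mainB; lra.
Qed.

Lemma yn_lb (N : nat) (Omega : R) (n z : Z) : (1 <= N)%nat ->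
  Cmod (dft_coef N Omega n) ^ 2 >=
  sin (PI * (nu_of N Omega - IZR z)) ^ 2 / PI ^ 2 * / (nu_of N Omega - IZR n) ^ 2.
Proof.
  intros HN. unfold dft_coef.
  assert (HNp : 0 < INR N) by (apply lt_0_INR; lia).
  pose proof PI_RGT_0 as HP.
  pose proof (dir_lb N (Omega - 2 * PI * IZR n / INR N) HN) as H.
  set (nu := nu_of N Omega) in *.
  assert (E1 : (Omega - 2 * PI * IZR n / INR N) * INR N
     = 2 * PI * (nu - IZR z) - 2 * PI * IZR (n - z)).
  { unfold nu, nu_of. rewrite minus_IZR. field. lra. }
  assert (E2 : INR N ^ 2 * (Omega - 2 * PI * IZR n / INR N) ^ 2
     = 4 * (PI ^ 2 * (nu - IZR n) ^ 2)).
  { unfold nu, nu_of. field. lra. }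
  rewrite E1, cos_shiftZ, E2 in H.
  replace (2 * PI * (nu - IZR z)) with (2 * (PI * (nu - IZR z))) in H by ring.
  rewrite cos_2a_sin in H. unfold Rsqr in H.
  replace (sin (PI * (nu - IZR z)) ^ 2 / PI ^ 2 * / (nu - IZR n) ^ 2) with
    ((2 - 2 * (1 - 2 * sin (PI * (nu - IZR z)) * sin (PI * (nu - IZR z)))) /
       (4 * (PI ^ 2 * (nu - IZR n) ^ 2))).
  - exact H.
  - unfold Rdiv. rewrite !Rinv_mult. set (r := / (nu - IZR n) ^ 2). field. lra.
Qed.

Lemma window_t (N : nat) (Omega : R) :
  let t := nu_of N Omega - IZR (n0_of N Omega) in -1/2 <= t < 1/2.
Proof.
  intros t. unfold t, n0_of, Rfloor_Z. rewrite minus_IZR.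
  destruct (archimed (nu_of N Omega + /2)) as [H1 H2]. lra.
Qed.

Lemma term_nonneg (c : C) : 0 <= Cmod c ^ 2.
Proof. apply pow2_ge_0. Qed.

Theorem mainTheorem2 (N : nat) (Omega : R) :
  (4 <= N)%nat -> -PI <= Omega <= PI ->
  energy4 N Omega >= 80 / (9 * PI ^ 2).
Proof.
  intros HN _. assert (HN1 : (1 <= N)%nat) by lia.
  pose proof PI_bounds as HP.
  assert (HP2 : 0 < PI ^ 2) by nra.
  pose proof (window_t N Omega) as Ht. simpl in Ht.
  unfold energy4, window4.
  set (n0 := n0_of N Omega) in *. set (nu := nu_of N Omega) in *.
  set (t := nu - IZR n0) in *.
  set (s := sin (PI * t) ^ 2).
  assert (B : forall n : Z, Cmod (dft_coef N Omega n) ^ 2 >= s / PI ^ 2 * / (nu - IZR n) ^ 2).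
  { intros n. apply (yn_lb N Omega n n0 HN1). }
  assert (Hfin : forall d, 0 < d <= 1/2 -> sin (PI * d) ^ 2 = s ->
     s / PI ^ 2 * Tsum d >= 80 / (9 * PI ^ 2)).
  { intros d Hd Hs. pose proof (mainM d Hd) as M. rewrite Hs in M.
    replace (80 / (9 * PI ^ 2)) with (80/9 / PI^2) by (field; lra).
    replace (s / PI ^ 2 * Tsum d) with (s * Tsum d / PI ^ 2) by (field; lra).
    apply Rle_ge. apply Rmult_le_compat_r; [apply Rlt_le, Rinv_0_lt_compat; lra | lra]. }
  destruct (Rle_dec (IZR n0) nu) as [Hle | Hlt]; cbn [map fold_right].
  - destruct (Req_dec t 0) as [Ht0 | Ht0].
    +
      assert (Hy : Cmod (dft_coef N Omega n0) = 1).
      { unfold dft_coef. replace (Omega - 2 * PI * IZR n0 / INR N) with 0.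
        - apply dir0; auto.
        - assert (HNp : 0 < INR N) by (apply lt_0_INR; lia).
          unfold t, nu, nu_of in Ht0.
          assert (IZR n0 = INR N * Omega / (2 * PI)) by lra.
          rewrite H. field. lra. }
      pose proof (term_nonneg (dft_coef N Omega (n0 - 1))).
      pose proof (term_nonneg (dft_coef N Omega (n0 + 1))).
      pose proof (term_nonneg (dft_coef N Omega (n0 + 2))).
      rewrite Hy.
      assert (80 / (9 * PI ^ 2) <= 1).
      { assert (PI^2 >= 9) by nra. apply (Rmult_le_reg_r (9 * PI^2)); [lra|]. unfold Rdiv. rewrite Rmult_assoc, Rinv_l; lra. }
      lra.
    + pose proof (B (n0 - 1)%Z). pose proof (B n0). pose proof (B (n0 + 1)%Z). pose proof (B (n0 + 2)%Z).
      rewrite ?minus_IZR, ?plus_IZR in *.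
      assert (Ht1 : 0 <= t) by (unfold t; lra).
      assert (Hd : 0 < t <= 1/2).
      { destruct (Rle_lt_or_eq_dec 0 t Ht1) as [?|?]; [lra | congruence]. }
      pose proof (Hfin t Hd eq_refl) as F.
      replace (nu - (IZR n0 - 1)) with (1 + t) in * by (unfold t; ring).
      replace (nu - IZR n0) with t in * by (unfold t; ring).
      replace (nu - (IZR n0 + 1)) with (-(1 - t)) in * by (unfold t; ring).
      replace (nu - (IZR n0 + 2)) with (-(2 - t)) in * by (unfold t; ring).
      assert (Hneg : forall a, (- a) ^ 2 = a ^ 2) by (intros; ring).
      rewrite !Hneg in *.
      unfold Tsum in F. lra.
  - apply Rnot_le_lt in Hlt. assert (Hd : 0 < -t <= 1/2) by (assert (t = nu - IZR n0) by reflexivity; lra).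
    assert (Es : sin (PI * - t) ^ 2 = s) by (unfold s; replace (PI * - t) with (- (PI * t)) by ring; rewrite sin_neg; ring).
    pose proof (Hfin (-t) Hd Es) as F.
    pose proof (B (n0 - 2)%Z). pose proof (B (n0 - 1)%Z). pose proof (B n0). pose proof (B (n0 + 1)%Z).
    rewrite ?minus_IZR, ?plus_IZR in *.
    replace (nu - (IZR n0 - 2)) with (2 - - t) in * by (unfold t; ring).
    replace (nu - (IZR n0 - 1)) with (1 - - t) in * by (unfold t; ring).
    replace (nu - IZR n0) with (- (- t)) in * by (unfold t; ring).
    replace (nu - (IZR n0 + 1)) with (- (1 + - t)) in * by (unfold t; ring).
    unfold Tsum in F.
    assert (Hneg : forall a, (- a) ^ 2 = a ^ 2) by (intros; ring).
    rewrite !Hneg in *. lra.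
Qed.
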